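(* Let $\mathfrak{sl}_2\langle\langle\lambda\rangle\rangle=\mathbb C[[\lambda^2]]h+\lambda\mathbb C[[\lambda^2]]e+\lambda\mathbb C[[\lambda^2]]f\subset\mathfrak{sl}_2[[\lambda]]$ (a Lie subalgebra) and $\mathfrak{sl}_2\langle\langle\lambda\rangle\rangle^L=\mathfrak{sl}_2\langle\langle\lambda\rangle\rangle\cap\lambda^L\mathfrak{sl}_2[[\lambda]]$ for $L\ge0$. Then there is a Lie algebra isomorphism $\widehat{\mathfrak{OA}}_1\cong\mathfrak{sl}_2\langle\langle\lambda\rangle\rangle$ which maps $\widehat{\mathfrak{OA}}_1^L$ onto $\mathfrak{sl}_2\langle\langle\lambda\rangle\rangle^L$ for every $L\ge0$, and hence induces isomorphisms $\mathfrak{OA}_{1,L}\cong\mathfrak{sl}_2\langle\langle\lambda\rangle\rangle/\mathfrak{sl}_2\langle\langle\lambda\rangle\rangle^L$ for all $L\ge0$.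
   Context: Work over $\mathbb C$. $\mathfrak{sl}_2$ has basis $e,f,h$ with $[e,f]=h$, $[h,e]=2e$, $[h,f]=-2f$; $\mathfrak{sl}_2[[\lambda]]=\mathbb C[[\lambda]]\otimes\mathfrak{sl}_2$. The Onsager algebra is the Lie subalgebra $\mathfrak{OA}=\{p(t)e+p(t^{-1})f+q(t)h:\ p,q\in\mathbb C[t,t^{-1}],\ q(t^{-1})=-q(t)\}$ of the loop algebra $\mathbb C[t,t^{-1}]\otimes\mathfrak{sl}_2$ (bracket $[px,qy]=pq[x,y]$). $\mathfrak I_{(t-1)^L}=\{p(t)e+p(t^{-1})f+q(t)h\in\mathfrak{OA}: p,q\in(t-1)^L\mathbb C[t,t^{-1}]\}$. For $L\ge1$, $\mathfrak{OA}_{1,L}=\mathfrak{OA}/\mathfrak I_{(t-1)^L}$, $\mathfrak{OA}_{1,0}=0$; for $L\ge K$ there are canonical surjections $\mathfrak{OA}_{1,L}\to\mathfrak{OA}_{1,K}$. $\widehat{\mathfrak{OA}}_1=\varprojlim_L\mathfrak{OA}_{1,L}$, $\psi_{1,L}:\widehat{\mathfrak{OA}}_1\to\mathfrak{OA}_{1,L}$ the canonical map, and $\widehat{\mathfrak{OA}}_1^L=\ker\psi_{1,L}$. *)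

(* Defs.v *)
From HB Require Import structures.
From mathcomp Require Import all_boot all_order all_algebra.
From mathcomp Require Import finmap.
From mathcomp Require Export reals complex.

Set Implicit Arguments.
Unset Strict Implicit.
Unset Printing Implicit Defensive.

Import Order.TTheory GRing.Theory Num.Theory.
Local Open Scope ring_scope.

Section OnsagerDefs.
Variable K : fieldType.

(* A Laurent polynomial is its finitely supported coefficient function int -> K:
   a = \sum_n a(n) t^n. *)
Definition laurent := {fsfun int -> K with 0}.

Definition ladd (a b : laurent) : laurent :=
  [fsfun n in (finsupp a `|` finsupp b)%fset => a n + b n | 0].
Definition lopp (a : laurent) : laurent :=
  [fsfun n in finsupp a => - a n | 0].
Definition lscale (c : K) (a : laurent) : laurent :=
  [fsfun n in finsupp a => c * a n | 0].
Definition lmul (a b : laurent) : laurent :=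
  [fsfun n in [fset (i + j)%R | i in finsupp a, j in finsupp b]%fset =>
     \sum_(i <- finsupp a) a i * b (n - i) | 0].
Definition linv (a : laurent) : laurent :=
  [fsfun n in [fset (- i)%R | i in finsupp a]%fset => a (- n) | 0].
Definition lmono (c : K) (k : int) : laurent := [fsfun n in [fset k]%fset => c | 0].
Definition lone : laurent := lmono 1 0.
Definition lpow (a : laurent) (L : nat) : laurent := iter L (lmul a) lone.
Definition ltm1 : laurent := ladd (lmono 1 1) (lmono (-1) 0).

(* Loop x stands for (le x) e + (lf x) f + (lh x) h *)
Record loop := Loop { le : laurent; lf : laurent; lh : laurent }.

Definition loop_add (x y : loop) : loop :=
  Loop (ladd (le x) (le y)) (ladd (lf x) (lf y)) (ladd (lh x) (lh y)).
Definition loop_opp (x : loop) : loop := Loop (lopp (le x)) (lopp (lf x)) (lopp (lh x)).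
Definition loop_sub (x y : loop) : loop := loop_add x (loop_opp y).
Definition loop_scale (c : K) (x : loop) : loop :=
  Loop (lscale c (le x)) (lscale c (lf x)) (lscale c (lh x)).
(* bracket [px,qy] = pq[x,y] with [e,f]=h, [h,e]=2e, [h,f]=-2f *)
Definition loop_br (x y : loop) : loop :=
  Loop (lscale 2 (ladd (lmul (lh x) (le y)) (lopp (lmul (le x) (lh y)))))
       (lscale 2 (ladd (lmul (lf x) (lh y)) (lopp (lmul (lh x) (lf y)))))
       (ladd (lmul (le x) (lf y)) (lopp (lmul (lf x) (le y)))).

Definition OA (x : loop) : Prop :=
  exists p q : laurent, linv q = lopp q /\ x = Loop p (linv p) q.

Definition OA_ideal (L : nat) (x : loop) : Prop :=
  exists p q : laurent,
    [/\ linv q = lopp q, x = Loop p (linv p) q,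
        exists r, p = lmul (lpow ltm1 L) r & exists s, q = lmul (lpow ltm1 L) s].

(* An element of the inverse limit is a compatible family (x_L mod I_L)_L; we
   represent it by a family of representatives x : nat -> loop in OA with
   x_L - x_K in I_K for K <= L; two families represent the same element iff
   x_L - y_L \in I_L for all L.  OA_{1,0} = 0 is accounted for by I_0 = OA. *)
Definition hatOA (x : nat -> loop) : Prop :=
  (forall L, OA (x L)) /\
  (forall K L, (K <= L)%N -> OA_ideal K (loop_sub (x L) (x K))).
Definition hat_eq (x y : nat -> loop) : Prop :=
  forall L, OA_ideal L (loop_sub (x L) (y L)).
Definition hat_add (x y : nat -> loop) : nat -> loop := fun L => loop_add (x L) (y L).
Definition hat_scale (c : K) (x : nat -> loop) : nat -> loop := fun L => loop_scale c (x L).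
Definition hat_br (x y : nat -> loop) : nat -> loop := fun L => loop_br (x L) (y L).
(* kernel of psi_{1,L} : x_L = 0 in OA_{1,L} *)
Definition ker_psi (L : nat) (x : nat -> loop) : Prop := OA_ideal L (x L).

Definition pser := nat -> K.
Definition padd (a b : pser) : pser := fun n => a n + b n.
Definition popp (a : pser) : pser := fun n => - a n.
Definition pscale (c : K) (a : pser) : pser := fun n => c * a n.
Definition pmul (a b : pser) : pser := fun n => \sum_(i < n.+1) a i * b (n - i)%N.

Record psl2 := PSl2 { pe : pser; pf : pser; ph : pser }.

Definition psl2_add (x y : psl2) : psl2 :=
  PSl2 (padd (pe x) (pe y)) (padd (pf x) (pf y)) (padd (ph x) (ph y)).
Definition psl2_opp (x : psl2) : psl2 := PSl2 (popp (pe x)) (popp (pf x)) (popp (ph x)).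
Definition psl2_sub (x y : psl2) : psl2 := psl2_add x (psl2_opp y).
Definition psl2_scale (c : K) (x : psl2) : psl2 :=
  PSl2 (pscale c (pe x)) (pscale c (pf x)) (pscale c (ph x)).
Definition psl2_br (x y : psl2) : psl2 :=
  PSl2 (pscale 2 (padd (pmul (ph x) (pe y)) (popp (pmul (pe x) (ph y)))))
       (pscale 2 (padd (pmul (pf x) (ph y)) (popp (pmul (ph x) (pf y)))))
       (padd (pmul (pe x) (pf y)) (popp (pmul (pf x) (pe y)))).

Definition sl2ll (z : psl2) : Prop :=
  forall n : nat,
    (odd n -> ph z n = 0) /\ (~~ odd n -> pe z n = 0 /\ pf z n = 0).
Definition sl2llL (L : nat) (z : psl2) : Prop :=
  sl2ll z /\ forall n : nat, (n < L)%N -> [/\ pe z n = 0, pf z n = 0 & ph z n = 0].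

End OnsagerDefs.

Definition Cx (R : realType) : fieldType := R[i].

(* Main.v *)
Require Import Defs.
From mathcomp Require Import all_boot all_order all_algebra.
From HB Require Import structures.
From mathcomp Require Import zify finmap ring.
From Stdlib Require Import FunctionalExtensionality ClassicalEpsilon.
Set Implicit Arguments.
Unset Strict Implicit.
Unset Printing Implicit Defensive.
Import Order.TTheory GRing.Theory Num.Theory.
Module Dev.
Local Open Scope ring_scope.

Section Laur.
Variable K : fieldType.
Local Notation laurent := (laurent K).

Lemma fsin_sub (S : {fset int}) (h : int -> K) :
  (finsupp ([fsfun n in S => h n | 0] : laurent) `<=` S)%fset.
Proof.
apply/fsubsetP => x; rewrite mem_finsupp fsfun_fun.
by case: ifP => //; rewrite eqxx.
Qed.

Lemma nsupp0 (a : laurent) k : k \notin finsupp a -> a k = 0.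
Proof. by move=> H; rewrite (fsfun_dflt H). Qed.

Lemma laddE (a b : laurent) n : ladd a b n = a n + b n.
Proof.
rewrite /ladd fsfun_fun; case: ifP => // /negbT.
rewrite in_fsetU negb_or => /andP[ha hb].
by rewrite !nsupp0 // addr0.
Qed.

Lemma loppE (a : laurent) n : lopp a n = - a n.
Proof. by rewrite /lopp fsfun_fun; case: ifP => // /negbT /nsupp0 ->; rewrite oppr0. Qed.

Lemma lscaleE c (a : laurent) n : lscale c a n = c * a n.
Proof. by rewrite /lscale fsfun_fun; case: ifP => // /negbT /nsupp0 ->; rewrite mulr0. Qed.

Lemma linvE (a : laurent) n : linv a n = a (- n).
Proof.
rewrite /linv fsfun_fun; case: ifP => // /negbT H.
rewrite nsupp0 //; apply: contra H => H.
by apply/imfsetP; exists (-n) => //; rewrite opprK.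
Qed.

Lemma lmonoE c k n : (lmono c k : laurent) n = if n == k then c else 0.
Proof. by rewrite /lmono fsfun_fun inE. Qed.

Lemma lmulE (a b : laurent) n :
  lmul a b n = \sum_(i <- finsupp a) a i * b (n - i).
Proof.
rewrite /lmul fsfun_fun; case: ifP => // /negbT H.
rewrite big1_fset // => i ia _.
rewrite [b _]nsupp0 ?mulr0 //; apply: contra H => H.
by apply/imfset2P; exists i => //; exists (n - i) => //; rewrite addrC subrK.
Qed.

Lemma sum_supp (V : nmodType) (a : laurent) (S : {fset int}) (F : int -> K -> V) :
  (finsupp a `<=` S)%fset -> (forall i, F i 0 = 0) ->
  \sum_(i <- finsupp a) F i (a i) = \sum_(i <- S) F i (a i).
Proof.
move=> sub F0; apply: big_fset_incl => // x _ /nsupp0 ->; exact: F0.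
Qed.

End Laur.

Section Pol.
Variable K : fieldType.
Local Notation laurent := (laurent K).
Implicit Types p q r : {poly K}.

Definition eqm N p q := forall i, (i < N)%N -> p`_i = q`_i.

Lemma eqm_refl N p : eqm N p p. Proof. by []. Qed.
Lemma eqm_sym N p q : eqm N p q -> eqm N q p. Proof. by move=> H i /H. Qed.
Lemma eqm_trans N p q r : eqm N p q -> eqm N q r -> eqm N p r.
Proof. by move=> H1 H2 i hi; rewrite H1 // H2. Qed.
Lemma eqm_le N M p q : (N <= M)%N -> eqm M p q -> eqm N p q.
Proof. by move=> hNM H i hi; apply: H; apply: leq_trans hNM. Qed.
Lemma eqmD N p q p' q' : eqm N p p' -> eqm N q q' -> eqm N (p + q) (p' + q').
Proof. by move=> H1 H2 i hi; rewrite !coefD H1 // H2. Qed.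
Lemma eqmZ N c p q : eqm N p q -> eqm N (c *: p) (c *: q).
Proof. by move=> H i hi; rewrite !coefZ H. Qed.
Lemma eqmM N p q p' q' : eqm N p p' -> eqm N q q' -> eqm N (p * q) (p' * q').
Proof.
move=> H1 H2 i hi; rewrite !coefM; apply: eq_bigr => j _.
rewrite H1 ?H2 //; first by apply: leq_ltn_trans hi; apply: leq_subr.
by apply: leq_ltn_trans hi; rewrite -ltnS.
Qed.
Lemma eqmX N p q m : eqm N p q -> eqm N (p ^+ m) (q ^+ m).
Proof.
move=> H; elim: m => [|m IH]; first exact: eqm_refl.
by rewrite !exprS; apply: eqmM.
Qed.
Lemma eqm_sum N (I : Type) (s : seq I) (F G : I -> {poly K}) :
  (forall i, eqm N (F i) (G i)) -> eqm N (\sum_(i <- s) F i) (\sum_(i <- s) G i).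
Proof.
move=> H i hi; rewrite !coef_sum; apply: eq_bigr => j _; exact: H.
Qed.
Lemma eqm_mul1 N p q : eqm N p 1 -> forall m, eqm N (q * p ^+ m) q.
Proof.
move=> H m; rewrite -[X in eqm _ _ X]mulr1; apply: eqmM; first exact: eqm_refl.
by rewrite -(expr1n _ m); apply: eqmX.
Qed.

Definition negp p := p \Po (- 'X).

Lemma coef_negp p i : (negp p)`_i = (-1) ^+ i * p`_i.
Proof.
elim/poly_ind: p i => [|p c IH] i; first by rewrite /negp comp_poly0 !coef0 mulr0.
rewrite /negp comp_polyD comp_polyM comp_polyX comp_polyC.
rewrite !coefD coefC mulrN coefN coefMX.
case: i => [|i]; rewrite coefMX /=; first by rewrite oppr0 !add0r expr0 mul1r.
by rewrite IH !addr0 exprS mulNr mul1r mulNr.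
Qed.

Lemma negpK p : negp (negp p) = p.
Proof.
apply/polyP => i; rewrite !coef_negp mulrA -exprMn mulrNN mulr1 expr1n mul1r //.
Qed.

Lemma negp_rmorph : exists f : {rmorphism {poly K} -> {poly K}}, negp =1 f.
Proof. by exists (comp_poly (- 'X)). Qed.

Definition Gs N : {poly K} := \sum_(i < N) 'X^i.
Definition Tp N := (1 + 'X) * Gs N.
Definition Tip N := negp (Tp N).

Definition tpow N (k : int) : {poly K} :=
  match k with Posz m => Tp N ^+ m | Negz m => Tip N ^+ m.+1 end.

Lemma TpTip N : eqm N (Tp N * Tip N) 1.
Proof.
have h1 : (1 - 'X) * Gs N = 1 - 'X^N.
  rewrite -{2}(expr1n _ N) subrXX /Gs; congr (_ * _); apply: eq_bigr => i _; by rewrite expr1n mul1r.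
have h2 : (1 + 'X) * negp (Gs N) = 1 - (- 'X)^+N.
  rewrite -{2}(expr1n _ N) subrXX opprK /Gs /negp rmorph_sum /=; congr (_ * _).
  by apply: eq_bigr => i _; rewrite expr1n mul1r rmorphXn /= comp_polyX.
have hT : Tip N = (1 - 'X) * negp (Gs N).
  by rewrite /Tip /Tp /negp rmorphM /= rmorphD /= rmorph1 comp_polyX.
have e : Tp N * Tip N = 1 - 'X^N * (1 + (-1)^+N - (-1)^+N * 'X^N).
  have -> : Tp N * Tip N = ((1 - 'X) * Gs N) * ((1 + 'X) * negp (Gs N)) by rewrite hT /Tp; ring.
  rewrite h1 h2 (exprNn 'X); ring.
move=> i hi; rewrite e coefB coefXnM hi subr0 //.
Qed.

Lemma eqm_Gs N M : (N <= M)%N -> eqm N (Gs N) (Gs M).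
Proof.
move=> hNM i hi; rewrite /Gs !coef_sum.
rewrite (eq_bigr (fun j : 'I_N => (i == j)%:R)); last by move=> j _; rewrite coefXn.
rewrite [RHS](eq_bigr (fun j : 'I_M => (i == j)%:R)); last by move=> j _; rewrite coefXn.
rewrite (bigD1 (Ordinal hi)) //= big1 ?eqxx; last first.
  by move=> j /negbTE; rewrite eq_sym -val_eqE /= => ->.
rewrite (bigD1 (Ordinal (leq_trans hi hNM))) //= big1 ?eqxx //.
by move=> j /negbTE; rewrite eq_sym -val_eqE /= => ->.
Qed.

Lemma eqm_Tp N M : (N <= M)%N -> eqm N (Tp N) (Tp M).
Proof. by move=> h; apply: eqmM; [exact: eqm_refl | exact: eqm_Gs]. Qed.

Lemma eqm_negp N p q : eqm N p q -> eqm N (negp p) (negp q).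
Proof. by move=> H i hi; rewrite !coef_negp H. Qed.

Lemma eqm_tpow N M k : (N <= M)%N -> eqm N (tpow N k) (tpow M k).
Proof.
move=> h; case: k => m /=; apply: eqmX; last apply: eqm_negp; exact: eqm_Tp.
Qed.

Lemma tpow_rep N k (B : nat) : 0 <= k + B%:Z ->
  eqm N (tpow N k) (Tp N ^+ absz (k + B%:Z)%R * Tip N ^+ B).
Proof.
case: k => m hB.
  have -> : absz (m%:Z + B%:Z)%R = (m + B)%N by lia.
  rewrite exprD -mulrA -exprMn; apply: eqm_sym; apply: eqm_mul1; exact: TpTip.
have e : (absz (Negz m + B%:Z)%R + m.+1)%N = B by lia.
rewrite -{2}e exprD mulrA -exprMn mulrC; apply: eqm_sym; apply: eqm_mul1; exact: TpTip.
Qed.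

Lemma tpowD N i j : eqm N (tpow N (i + j)) (tpow N i * tpow N j).
Proof.
have h1 := @tpow_rep N (i + j) (absz i + absz j)%N.
have h2 := @tpow_rep N i (absz i).
have h3 := @tpow_rep N j (absz j).
have h4 : absz (i + j + (absz i + absz j)%N%:Z)%R = (absz (i + (absz i)%:Z)%R + absz (j + (absz j)%:Z)%R)%N by lia.
apply: eqm_trans (h1 _) _; first by lia.
apply: eqm_sym; apply: eqm_trans (eqmM (h2 _) (h3 _)) _; try lia.
rewrite h4 !exprD; have -> : forall a b c d : {poly K}, a * c * (b * d) = a * b * (c * d) by move=> *; ring.
exact: eqm_refl.
Qed.

Lemma tpowN N k : negp (tpow N k) = tpow N (- k).
Proof.
have hX : forall p m, negp (p ^+ m) = (negp p) ^+ m.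
  by move=> p m; rewrite /negp rmorphXn.
case: k => [[|m]|m] /=.
- by rewrite !expr0 /negp comp_polyC.
- by rewrite hX.
- by rewrite hX /Tip negpK.
Qed.

Lemma tpow0 N : tpow N 0 = 1. Proof. by rewrite /= expr0. Qed.
Lemma tpow1 N : tpow N 1 = Tp N. Proof. by rewrite /= expr1. Qed.

Definition E N (a : laurent) : {poly K} := \sum_(k <- finsupp a) a k *: tpow N k.

Lemma E_sup N (a : laurent) (S : {fset int}) : (finsupp a `<=` S)%fset ->
  E N a = \sum_(k <- S) a k *: tpow N k.
Proof. by move=> h; rewrite /E (@sum_supp K _ a S (fun k x => x *: tpow N k)) // => i; rewrite scale0r. Qed.

End Pol.

Section Ev.
Variable K : fieldType.
Local Notation laurent := (laurent K).

Lemma E_add N (a b : laurent) : E N (ladd a b) = E N a + E N b.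
Proof.
rewrite (E_sup N (fsin_sub _ _)) (E_sup N (fsubsetUl (finsupp a) (finsupp b))).
rewrite (E_sup N (fsubsetUr (finsupp a) (finsupp b))) -big_split /=.
by apply: eq_bigr => k _; rewrite laddE scalerDl.
Qed.

Lemma E_opp N (a : laurent) : E N (lopp a) = - E N a.
Proof.
rewrite (E_sup N (fsin_sub _ _)) /E -sumrN.
by apply: eq_bigr => k _; rewrite loppE scaleNr.
Qed.

Lemma E_scale N c (a : laurent) : E N (lscale c a) = c *: E N a.
Proof.
rewrite (E_sup N (fsin_sub _ _)) /E scaler_sumr.
by apply: eq_bigr => k _; rewrite lscaleE scalerA.
Qed.

Lemma E_mono N c k : E N (lmono c k : laurent) = c *: tpow K N k.
Proof.
rewrite (E_sup N (fsin_sub _ _)) big_seq_fset1.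
by rewrite lmonoE eqxx.
Qed.

Lemma E_inv N (a : laurent) : E N (linv a) = negp (E N a).
Proof.
rewrite (E_sup N (fsin_sub _ _)) big_imfset /=; last by move=> x y _ _ /oppr_inj.
rewrite /E /negp linear_sum /=.
apply: eq_bigr => k _; rewrite linvE opprK linearZ /=.
by rewrite -/(negp _) tpowN.
Qed.


Lemma shift_sum (V : lmodType K) (b : laurent) (S : {fset int}) i (F : int -> V) :
  ([fset (i + j)%R | j in finsupp b] `<=` S)%fset ->
  \sum_(n <- S) b (n - i) *: F n = \sum_(j <- finsupp b) b j *: F (i + j).
Proof.
move=> sub.
have -> : \sum_(j <- finsupp b) b j *: F (i + j) =
          \sum_(n <- [fset (i + j)%R | j in finsupp b]%fset) b (n - i) *: F n.
  rewrite big_imfset /=; last by move=> x y _ _ /addrI.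
  by apply: eq_bigr => j _; rewrite addrC addrK.
apply: esym; apply: big_fset_incl => // n _ nI.
rewrite nsupp0 ?scale0r //; apply: contra nI => H.
by apply/imfsetP; exists (n - i) => //; rewrite addrC subrK.
Qed.

Lemma E_mul N (a b : laurent) : eqm N (E N (lmul a b)) (E N a * E N b).
Proof.
rewrite (E_sup N (fsin_sub _ _)).
set S := [fset _ | _ in _, _ in _]%fset.
have -> : \sum_(n <- S) lmul a b n *: tpow K N n =
          \sum_(i <- finsupp a) a i *: \sum_(j <- finsupp b) b j *: tpow K N (i + j).
  transitivity (\sum_(n <- S) \sum_(i <- finsupp a) a i *: (b (n - i) *: tpow K N n)).
    apply: eq_bigr => n _; rewrite lmulE scaler_suml; apply: eq_bigr => i _.
    by rewrite scalerA.
  rewrite exchange_big /=; apply: eq_big_seq => i ia; rewrite -scaler_sumr.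
  congr (_ *: _); apply: shift_sum.
  apply/fsubsetP => n /imfsetP [j /= jb ->].
  by apply/imfset2P; exists i => //; exists j.
rewrite /E mulr_suml; apply: eqm_sum => i; rewrite -scalerAl mulr_sumr.
apply: eqmZ; apply: eqm_sum => j; rewrite -scalerAr; apply: eqmZ.
exact: tpowD.
Qed.

End Ev.

Section Ser.
Variable K : fieldType.
Local Notation laurent := (laurent K).
Local Notation pser := (pser K).
Implicit Types u v w : pser.

Lemma pmulDl u v w : pmul (padd u v) w = padd (pmul u w) (pmul v w).
Proof. apply: functional_extensionality => n; rewrite /pmul /padd -big_split /=; apply: eq_bigr => i _; exact: mulrDl. Qed.
Lemma pmulDr u v w : pmul w (padd u v) = padd (pmul w u) (pmul w v).
Proof. apply: functional_extensionality => n; rewrite /pmul /padd -big_split /=; apply: eq_bigr => i _; exact: mulrDr. Qed.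
Lemma pmulNl u w : pmul (popp u) w = popp (pmul u w).
Proof. apply: functional_extensionality => n; rewrite /pmul /popp -sumrN; apply: eq_bigr => i _; exact: mulNr. Qed.
Lemma pmulNr u w : pmul w (popp u) = popp (pmul w u).
Proof. apply: functional_extensionality => n; rewrite /pmul /popp -sumrN; apply: eq_bigr => i _; exact: mulrN. Qed.
Lemma pmulZl c u w : pmul (pscale c u) w = pscale c (pmul u w).
Proof. apply: functional_extensionality => n; rewrite /pmul /pscale mulr_sumr; apply: eq_bigr => i _; by rewrite mulrA. Qed.
Lemma pmulZr c u w : pmul w (pscale c u) = pscale c (pmul w u).
Proof.
apply: functional_extensionality => n; rewrite /pmul /pscale mulr_sumr; apply: eq_bigr => i _.
by rewrite mulrCA.
Qed.

Lemma pmul_ext u v u' v' n : (forall i, (i <= n)%N -> u i = u' i) ->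
  (forall i, (i <= n)%N -> v i = v' i) -> pmul u v n = pmul u' v' n.
Proof.
move=> H1 H2; rewrite /pmul; apply: eq_bigr => [[i hi]] _ /=.
by rewrite H1 // H2 // leq_subr.
Qed.

Lemma pmul_van u v A B : (forall i, (i < A)%N -> u i = 0) ->
  (forall j, (j < B)%N -> v j = 0) -> forall n, (n < A + B)%N -> pmul u v n = 0.
Proof.
move=> H1 H2 n hn; rewrite /pmul big1 // => [[i hi]] _ /=.
case: (ltnP i A) => hiA; first by rewrite H1 // mul0r.
by rewrite H2 ?mulr0 //; lia.
Qed.

Definition ce (a : laurent) : pser := fun n => (E n.+1 a)`_n.

Lemma eqm_E N M (a : laurent) : (N <= M)%N -> eqm N (E N a) (E M a).
Proof. by move=> h; apply: eqm_sum => k; apply: eqmZ; apply: eqm_tpow. Qed.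

Lemma ceE N (a : laurent) n : (n < N)%N -> ce a n = (E N a)`_n.
Proof. by move=> h; rewrite /ce (eqm_E a h). Qed.

Lemma ce_add (a b : laurent) : ce (ladd a b) = padd (ce a) (ce b).
Proof. by apply: functional_extensionality => n; rewrite /ce E_add coefD. Qed.
Lemma ce_opp (a : laurent) : ce (lopp a) = popp (ce a).
Proof. by apply: functional_extensionality => n; rewrite /ce E_opp coefN. Qed.
Lemma ce_scale c (a : laurent) : ce (lscale c a) = pscale c (ce a).
Proof. by apply: functional_extensionality => n; rewrite /ce E_scale coefZ. Qed.
Lemma ce_inv (a : laurent) n : ce (linv a) n = (-1) ^+ n * ce a n.
Proof. by rewrite /ce E_inv coef_negp. Qed.
Lemma ce_mul (a b : laurent) : ce (lmul a b) = pmul (ce a) (ce b).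
Proof.
apply: functional_extensionality => n; rewrite /ce (E_mul a b) // coefM /pmul.
apply: eq_bigr => [[i hi]] _ /=; rewrite -!ceE //; lia.
Qed.

Lemma coef_Gs N i : (Gs K N)`_i = (i < N)%:R.
Proof.
rewrite /Gs coef_sum.
rewrite (eq_bigr (fun j : 'I_N => (i == j)%:R)); last by move=> j _; rewrite coefXn.
case: (ltnP i N) => hi.
  rewrite (bigD1 (Ordinal hi)) //= big1 ?eqxx ?addr0 //.
  by move=> j /negbTE; rewrite eq_sym -val_eqE /= => ->.
rewrite big1 // => j _; case: eqP => // e; move: (ltn_ord j); rewrite -e; lia.
Qed.

Lemma ce_ltm1 n : ce (ltm1 K) n = if n == 0%N then 0 else 2.
Proof.
rewrite /ce /ltm1 E_add !E_mono tpow1 tpow0 coefD coefZ mul1r coefZ coef1 /Tp.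
rewrite mulrDl mul1r coefD coefXM !coef_Gs.
case: n => [|n] /=; first by ring.
by rewrite !ltnS leqnn leqnSn /=; ring.
Qed.

Lemma ce_lone n : ce (lone K) n = (n == 0%N)%:R.
Proof. by rewrite /ce /lone E_mono tpow0 coefZ mul1r coef1. Qed.

Lemma lpowS (a : laurent) L : lpow a L.+1 = lmul a (lpow a L).
Proof. by []. Qed.

Lemma ce_lpow L : (forall n, (n < L)%N -> ce (lpow (ltm1 K) L) n = 0) /\ ce (lpow (ltm1 K) L) L = 2 ^+ L.
Proof.
elim: L => [|L [IH1 IH2]].
  by split => // ; rewrite /lpow /= ce_lone.
rewrite lpowS ce_mul; split.
  apply: (pmul_van (A := 1) (B := L)) => // i; rewrite ltnS leqn0 => /eqP ->.
  by rewrite ce_ltm1.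
rewrite /pmul big_ord_recl /= ce_ltm1 /= mul0r add0r big_ord_recl /=.
rewrite big1 ?addr0; last first.
  move=> [i hi] _ /=; rewrite IH1 ?mulr0 //.
  rewrite /bump /=; lia.
have -> : (L.+1 - bump 0 0)%N = L by rewrite /bump /=; lia.
by rewrite ce_ltm1 /= IH2 exprS.
Qed.

End Ser.

Section Div.
Variable K : fieldType.
Local Notation laurent := (laurent K).
Local Notation pser := (pser K).

Lemma shift_gen (V : nmodType) (b : laurent) (S : {fset int}) i (G : int -> K -> V) :
  (forall n, G n 0 = 0) ->
  ([fset (i + j)%R | j in finsupp b] `<=` S)%fset ->
  \sum_(n <- S) G n (b (n - i)) = \sum_(j <- finsupp b) G (i + j) (b j).
Proof.
move=> G0 sub.
have -> : \sum_(j <- finsupp b) G (i + j) (b j) =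
          \sum_(n <- [fset (i + j)%R | j in finsupp b]%fset) G n (b (n - i)).
  rewrite big_imfset /=; last by move=> x y _ _ /addrI.
  by apply: eq_bigr => j _; rewrite addrC addrK.
apply: esym; apply: big_fset_incl => // n _ nI.
rewrite nsupp0 ?G0 //; apply: contra nI => H.
by apply/imfsetP; exists (n - i) => //; rewrite addrC subrK.
Qed.

Lemma lmulA (a b c : laurent) : lmul (lmul a b) c = lmul a (lmul b c).
Proof.
apply/fsfunP => n; rewrite lmulE.
rewrite (@sum_supp K _ (lmul a b) _ (fun k x => x * c (n - k)) (fsin_sub _ _)); last by move=> i; rewrite mul0r.
set S := [fset _ | _ in _, _ in _]%fset.
transitivity (\sum_(k <- S) \sum_(i <- finsupp a) a i * (b (k - i) * c (n - k))).
  by apply: eq_bigr => k _; rewrite lmulE mulr_suml; apply: eq_bigr => i _; rewrite mulrA.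
rewrite exchange_big /= lmulE; apply: eq_big_seq => i ia.
rewrite -mulr_sumr lmulE; congr (_ * _).
rewrite (@shift_gen _ b S i (fun k x => x * c (n - k))); first last.
- apply/fsubsetP => m /imfsetP [j /= jb ->].
  by apply/imfset2P; exists i => //; exists j.
- by move=> m; rewrite mul0r.
by apply: eq_bigr => j _; rewrite opprD addrA.
Qed.

Lemma lmul1 (a : laurent) : lmul (lone K) a = a.
Proof.
apply/fsfunP => n; rewrite lmulE.
rewrite (@sum_supp K _ (lone K) [fset 0]%fset (fun k x => x * a (n - k)) (fsin_sub _ _)); last by move=> i; rewrite mul0r.
by rewrite big_seq_fset1 lmonoE eqxx mul1r subr0.
Qed.

Lemma coef0_tpow N k : (0 < N)%N -> (tpow K N k)`_0 = 1.
Proof.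
move=> hN.
have hT : (Tp K N)`_0 = 1. rewrite /Tp coef0M coef_Gs hN coefD coef1 coefX; by rewrite /= addr0 mulr1.
have hX : forall (p : {poly K}) (m : nat), p`_0 = 1 -> (p ^+ m)`_0 = 1.
  by move=> p m hp; elim: m => [|m IH]; rewrite ?expr0 ?coef1 // exprS coef0M hp IH mul1r.
case: k => m /=; apply: hX => //.
by rewrite /Tip coef_negp expr0 mul1r.
Qed.

Lemma ce0 (a : laurent) : ce a 0 = \sum_(k <- finsupp a) a k.
Proof.
rewrite /ce /E coef_sum; apply: eq_bigr => k _.
by rewrite coefZ coef0_tpow // mulr1.
Qed.

Lemma supp_bound (a : laurent) k : k \in finsupp a ->
  (absz k <= \sum_(j <- finsupp a) absz j)%N.
Proof.
move=> ka; rewrite (bigD1_seq k) /= ?fset_uniq //; lia.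
Qed.

Lemma ltm1E k : ltm1 K k = (k == 1)%:R - (k == 0)%:R.
Proof.
rewrite /ltm1 laddE !lmonoE.
by case: (k == 1); case: (k == 0); rewrite /= ?mulr0n ?mulr1n ?subr0 ?sub0r ?addr0 ?add0r.
Qed.

Lemma lmul_ltm1 (b : laurent) n : lmul (ltm1 K) b n = b (n - 1) - b n.
Proof.
rewrite lmulE.
have sub : (finsupp (ltm1 K) `<=` [fset (1:int); 0])%fset.
  apply/fsubsetP => k; rewrite mem_finsupp ltm1E !inE.
  by case: (k == 1); case: (k == 0); rewrite //= subrr eqxx.
rewrite (@sum_supp K _ (ltm1 K) _ (fun k x => x * b (n - k)) sub); last by move=> i; rewrite mul0r.
rewrite big_fsetU1 ?inE // big_seq_fset1 !ltm1E /= subr0.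
by rewrite subr0 sub0r mul1r mulN1r.
Qed.

Lemma div_step (a : laurent) : ce a 0 = 0 -> exists a' : laurent, a = lmul (ltm1 K) a'.
Proof.
rewrite ce0 => hsum.
set B := (\sum_(j <- finsupp a) absz j)%N.
set D := [fset (i%:Z - B%:Z)%R | i in iota 0 (B + B).+1]%fset.
pose V n := \sum_(k <- finsupp a | n < k) a k.
have VD : forall n, n \notin D -> V n = 0.
  move=> n nD.
  have : ~ (- (B%:Z) <= n <= B%:Z).
    move=> /andP[h1 h2]; move/negP: nD; apply; apply/imfsetP.
    exists (absz (n + B%:Z)%R); last by lia.
    by rewrite mem_iota; lia.
  move=> hn; rewrite /V.
  case: (lerP n B%:Z) => hnB.
    have hn' : n < - (B%:Z) by lia.
    transitivity (\sum_(k <- finsupp a) a k); last exact: hsum.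
    rewrite big_seq_cond [RHS]big_seq_cond; apply: eq_bigl => k.
    case: (boolP (k \in finsupp a)) => //= ka; 
    apply/idP; have := supp_bound ka; rewrite -/B; lia.
  rewrite big1_seq // => k /andP [hk ka].
  have := supp_bound ka; rewrite -/B => hk'; lia.
exists ([fsfun n in D => V n | 0] : laurent).
apply/fsfunP => n; rewrite lmul_ltm1 !fsfun_fun.
have -> : (if n - 1 \in D then V (n - 1) else 0) = V (n - 1).
  by case: ifP => // /negbT /VD ->.
have -> : (if n \in D then V n else 0) = V n.
  by case: ifP => // /negbT /VD ->.
rewrite /V (bigID (fun k => k == n)) /=.
have -> : \sum_(i <- finsupp a | (n - 1 < i) && (i != n)) a i = \sum_(k <- finsupp a | n < k) a k.
  by apply: eq_bigl => k; apply/idP/idP => h; lia.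
rewrite addrK.
have -> : \sum_(i <- finsupp a | (n - 1 < i) && (i == n)) a i = \sum_(i <- finsupp a | i == n) a i.
  by apply: eq_bigl => k; apply/idP/idP => h; lia.
rewrite -big_filter.
case: (boolP (n \in finsupp a)) => hn.
  by rewrite (_ : [seq _ <- _ | _] = [:: n]) ?big_seq1 //; apply: filter_pred1_uniq.
rewrite (nsupp0 hn) big1_seq // => k /andP [_]; rewrite mem_filter => /andP [/eqP ek h].
by rewrite ek in h; rewrite h in hn.
Qed.

Lemma pmul_at (u v : pser) n : u 0%N = 0 -> (forall j, (j < n)%N -> v j = 0) ->
  pmul u v n.+1 = u 1%N * v n.
Proof.
move=> h0 hv.
rewrite /pmul big_ord_recl /= h0 mul0r add0r big_ord_recl /=.
rewrite big1 ?addr0; last first.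
  move=> [i hi] _ /=; rewrite hv ?mulr0 //.
  rewrite /bump /=; lia.
by have -> : (n.+1 - bump 0 0)%N = n by rewrite /bump /=; lia.
Qed.

Lemma ce_div L (a : laurent) : (2 : K) != 0 -> (forall n, (n < L)%N -> ce a n = 0) ->
  exists r, a = lmul (lpow (ltm1 K) L) r.
Proof.
move=> h2; elim: L a => [|L IH] a ha.
  by exists a; rewrite /lpow /= lmul1.
have [a' ea] := div_step (ha 0%N (ltn0Sn _)).
have ha' : forall n, (n < L)%N -> ce a' n = 0.
  elim/ltn_ind => n IHn hn.
  have := ha n.+1 hn; rewrite ea ce_mul pmul_at ?ce_ltm1 //; last first.
    by move=> j hj; apply: IHn => //; lia.
  by move/eqP; rewrite mulf_eq0 (negbTE h2) /= => /eqP.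
have [r er] := IH a' ha'.
by exists r; rewrite ea er lpowS lmulA.
Qed.

Lemma ce_surj0 L (s : pser) : (2 : K) != 0 -> exists a : laurent, forall n, (n < L)%N -> ce a n = s n.
Proof.
move=> h2; elim: L => [|L [a ha]]; first by exists (lone K).
pose d := (s L - ce a L) / 2 ^+ L.
exists (ladd a (lscale d (lpow (ltm1 K) L))) => n hn.
rewrite ce_add /padd ce_scale /pscale.
have [H1 H2] := ce_lpow K L.
rewrite ltnS leq_eqVlt in hn; case/orP: hn => [/eqP ->|hn].
  rewrite H2 /d divfK ?subrKC //; exact: expf_neq0.
by rewrite H1 // mulr0 addr0 ha.
Qed.

End Div.

Section Phi.
Variable K : fieldType.
Hypothesis h2 : (2 : K) != 0.
Local Notation laurent := (laurent K).
Local Notation pser := (pser K).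

Definition c2 : K := 2^-1.

Definition phi (x : loop K) : psl2 K :=
  PSl2 (padd (ce (lh x)) (popp (pscale c2 (padd (ce (le x)) (popp (ce (lf x)))))))
       (padd (ce (lh x)) (pscale c2 (padd (ce (le x)) (popp (ce (lf x))))))
       (pscale c2 (padd (ce (le x)) (ce (lf x)))).

Lemma phi_lin c x y : phi (loop_add (loop_scale c x) y) = psl2_add (psl2_scale c (phi x)) (phi y).
Proof.
rewrite /phi /psl2_add /psl2_scale /=; rewrite !ce_add !ce_scale.
congr PSl2; apply: functional_extensionality => n; rewrite /padd /popp /pscale; ring.
Qed.

Lemma phi_sub x y : phi (loop_sub x y) = psl2_sub (phi x) (phi y).
Proof.
rewrite /phi /psl2_sub /psl2_add /psl2_opp /loop_sub /loop_add /loop_opp /=; rewrite !ce_add !ce_opp.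
congr PSl2; apply: functional_extensionality => n; rewrite /padd /popp /pscale; ring.
Qed.

Lemma pmulDl' (u v w : pser) m : pmul (fun n => u n + v n) w m = pmul u w m + pmul v w m.
Proof. by rewrite /pmul -big_split /=; apply: eq_bigr => i _; rewrite mulrDl. Qed.
Lemma pmulDr' (u v w : pser) m : pmul w (fun n => u n + v n) m = pmul w u m + pmul w v m.
Proof. by rewrite /pmul -big_split /=; apply: eq_bigr => i _; rewrite mulrDr. Qed.
Lemma pmulNl' (u w : pser) m : pmul (fun n => - u n) w m = - pmul u w m.
Proof. by rewrite /pmul -sumrN /=; apply: eq_bigr => i _; rewrite mulNr. Qed.
Lemma pmulNr' (u w : pser) m : pmul w (fun n => - u n) m = - pmul w u m.
Proof. by rewrite /pmul -sumrN /=; apply: eq_bigr => i _; rewrite mulrN. Qed.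
Lemma pmulZl' c (u w : pser) m : pmul (fun n => c * u n) w m = c * pmul u w m.
Proof. by rewrite /pmul mulr_sumr /=; apply: eq_bigr => i _; rewrite mulrA. Qed.
Lemma pmulZr' c (u w : pser) m : pmul w (fun n => c * u n) m = c * pmul w u m.
Proof. by rewrite /pmul mulr_sumr /=; apply: eq_bigr => i _; rewrite mulrCA. Qed.
Lemma pmulBl' (u v w : pser) m : pmul (fun n => u n - v n) w m = pmul u w m - pmul v w m.
Proof. by rewrite /pmul -sumrB /=; apply: eq_bigr => i _; rewrite mulrBl. Qed.
Lemma pmulBr' (u v w : pser) m : pmul w (fun n => u n - v n) m = pmul w u m - pmul w v m.
Proof. by rewrite /pmul -sumrB /=; apply: eq_bigr => i _; rewrite mulrBr. Qed.
Lemma phi_br x y : phi (loop_br x y) = psl2_br (phi x) (phi y).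
Proof.
rewrite /phi /psl2_br /loop_br; cbn [pe pf ph le lf lh].
rewrite !ce_scale !ce_add !ce_opp !ce_mul.
rewrite !pmulDl !pmulDr !pmulNl !pmulNr !pmulZl !pmulZr.
congr PSl2; apply: functional_extensionality => n; rewrite /padd /popp /pscale /c2;
  rewrite ?pmulDl' ?pmulDr' ?pmulBl' ?pmulBr' ?pmulNl' ?pmulNr' ?pmulZl' ?pmulZr'; field. all: exact: h2.
Qed.


Definition low L (z : psl2 K) := forall n, (n < L)%N -> [/\ pe z n = 0, pf z n = 0 & ph z n = 0].

Lemma sgn_odd n : odd n -> (-1 : K) ^+ n = -1.
Proof. by move=> h; rewrite -signr_odd h expr1. Qed.
Lemma sgn_even n : ~~ odd n -> (-1 : K) ^+ n = 1.
Proof. by move=> h; rewrite -signr_odd (negbTE h) expr0. Qed.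

Lemma phiE x n :
  [/\ pe (phi x) n = ce (lh x) n - c2 * (ce (le x) n - ce (lf x) n),
      pf (phi x) n = ce (lh x) n + c2 * (ce (le x) n - ce (lf x) n) &
      ph (phi x) n = c2 * (ce (le x) n + ce (lf x) n)].
Proof. by []. Qed.

Lemma two_mul_eq0 (a : K) : a + a = 0 -> a = 0.
Proof.
move=> h; have : 2 * a = 0 by rewrite mulr2n mulrDl mul1r.
by move/eqP; rewrite mulf_eq0 (negbTE h2) /= => /eqP.
Qed.

Lemma OA_sl2ll (x : loop K) : OA x -> sl2ll (phi x).
Proof.
case=> p [q [hq ->]] n.
have hQ : (-1) ^+ n * ce q n = - ce q n by rewrite -ce_inv hq ce_opp.
have [he hf hh] := phiE (Loop p (linv p) q) n.
rewrite he hf hh; cbn [le lf lh]; rewrite ce_inv; split => hn.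
  by rewrite sgn_odd //; ring.
rewrite sgn_even // in hQ *; rewrite mul1r in hQ.
have -> : ce q n = 0 by apply: two_mul_eq0; rewrite {1}hQ addNr.
by split; ring.
Qed.

Lemma OA_sub (x y : loop K) : OA x -> OA y -> OA (loop_sub x y).
Proof.
case=> p [q [hq ->]]; case=> p' [q' [hq' ->]].
exists (ladd p (lopp p')), (ladd q (lopp q')); split.
  apply/fsfunP => n; rewrite linvE !loppE !laddE !loppE.
  have e := congr1 (fun f : laurent => f n) hq; have e' := congr1 (fun f : laurent => f n) hq'.
  rewrite /= !linvE !loppE in e e'; rewrite e e'; ring.
rewrite /loop_sub /loop_add /loop_opp /=; congr Loop.
by apply/fsfunP => n; rewrite linvE !laddE !loppE !linvE.
Qed.

Lemma ideal_low L (w : loop K) : OA_ideal L w -> low L (phi w).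
Proof.
case=> p [q [hq -> [r hr] [s hs]]] n hn.
have hP : ce p n = 0.
  rewrite hr ce_mul; apply: (pmul_van (A := L) (B := 0)) => //; last by rewrite addn0.
  by move=> i hi; have [H1 _] := ce_lpow K L; exact: H1.
have hQ : ce q n = 0.
  rewrite hs ce_mul; apply: (pmul_van (A := L) (B := 0)) => //; last by rewrite addn0.
  by move=> i hi; have [H1 _] := ce_lpow K L; exact: H1.
have [he hf hh] := phiE (Loop p (linv p) q) n.
by rewrite he hf hh; cbn [le lf lh]; rewrite ce_inv hP hQ; split; ring.
Qed.

Lemma low_ideal L (w : loop K) : OA w -> low L (phi w) -> OA_ideal L w.
Proof.
case=> p [q [hq ew]] hl; subst w.
have hz : forall n, (n < L)%N -> ce p n = 0 /\ ce q n = 0.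
  move=> n hn; have [e1 e2 e3] := hl n hn.
  have [he hf hh] := phiE (Loop p (linv p) q) n.
  rewrite he /= ce_inv in e1; rewrite hf /= ce_inv in e2; rewrite hh /= in e3.
  have hQ : ce q n = 0.
    by apply: two_mul_eq0; rewrite -[RHS](addr0 0) -{1}e1 -{1}e2; ring.
  split => //.
  have hD : c2 * (ce p n - (-1) ^+ n * ce p n) = 0 by rewrite -e2 hQ add0r.
  rewrite ce_inv in e3.
  have -> : ce p n = c2 * (ce p n - (-1) ^+ n * ce p n) + c2 * (ce p n + (-1) ^+ n * ce p n).
    rewrite /c2; field; exact: h2.
  by rewrite hD e3 addr0.
have [r hr] := ce_div h2 (fun n hn => proj1 (hz n hn)).
have [s hs] := ce_div h2 (fun n hn => proj2 (hz n hn)).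
by exists p, q; split => //; [exists r | exists s].
Qed.

Lemma surj_low L (z : psl2 K) : sl2ll z -> exists w : loop K, OA w /\ (forall n, (n < L)%N -> [/\ pe (phi w) n = pe z n, pf (phi w) n = pf z n & ph (phi w) n = ph z n]).
Proof.
move=> hz.
have [ap hp] := ce_surj0 L (padd (ph z) (pscale c2 (padd (pf z) (popp (pe z))))) h2.
have [aq hq] := ce_surj0 L (pscale c2 (padd (pe z) (pf z))) h2.
pose q := lscale c2 (ladd aq (lopp (linv aq))).
have hqa : linv q = lopp q.
  apply/fsfunP => n; rewrite /q linvE !lscaleE !laddE !loppE !linvE opprK. rewrite lscaleE laddE loppE linvE; ring.
exists (Loop ap (linv ap) q); split; first by exists ap, q.
move=> n hn; have [he hf hh] := phiE (Loop ap (linv ap) q) n.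
have hqn : ce q n = c2 * (pe z n + pf z n).
  rewrite /q ce_scale ce_add ce_opp /pscale /padd /popp ce_inv hq //.
  have [hzo hze] := hz n.
  case: (boolP (odd n)) => hn'.
    rewrite sgn_odd // /pscale /padd /c2; field; exact: h2.
  have [-> ->] := hze hn'; rewrite sgn_even // /pscale /padd; ring.
rewrite he hf hh; cbn [le lf lh]; rewrite ce_inv hqn hp // /padd /pscale /popp.
have [hzo hze] := hz n.
case: (boolP (odd n)) => hn'.
  rewrite sgn_odd // hzo //; split; rewrite /c2; field; exact: h2.
have [e1 e2] := hze hn'; rewrite sgn_even // e1 e2; split; rewrite /c2; field; exact: h2.
Qed.

End Phi.

Section Main.
Variable K : fieldType.
Hypothesis h2 : (2 : K) != 0.

Definition PhiH (X : nat -> loop K) : psl2 K :=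
  PSl2 (fun n => pe (phi (X n.+1)) n) (fun n => pf (phi (X n.+1)) n) (fun n => ph (phi (X n.+1)) n).

Lemma psl2_ext (a b : psl2 K) :
  (forall n, [/\ pe a n = pe b n, pf a n = pf b n & ph a n = ph b n]) -> a = b.
Proof.
case: a => ae af ah; case: b => be bf bh /= H.
congr PSl2; apply: functional_extensionality => n; by case: (H n).
Qed.

Lemma psl2_subE (a b : psl2 K) n :
  [/\ pe (psl2_sub a b) n = pe a n - pe b n, pf (psl2_sub a b) n = pf a n - pf b n
    & ph (psl2_sub a b) n = ph a n - ph b n].
Proof. by []. Qed.

Lemma sub_eq (a b : K) : a + - b = 0 -> a = b.
Proof. by move/eqP; rewrite subr_eq0 => /eqP. Qed.

Lemma low_sub L (x y : loop K) : low L (phi (loop_sub x y)) ->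
  forall n, (n < L)%N -> [/\ pe (phi x) n = pe (phi y) n, pf (phi x) n = pf (phi y) n & ph (phi x) n = ph (phi y) n].
Proof.
rewrite phi_sub => H n hn; have [e1 e2 e3] := H n hn.
by split; apply: sub_eq.
Qed.

Lemma sub_low L (x y : loop K) :
  (forall n, (n < L)%N -> [/\ pe (phi x) n = pe (phi y) n, pf (phi x) n = pf (phi y) n & ph (phi x) n = ph (phi y) n])
  -> low L (phi (loop_sub x y)).
Proof.
rewrite phi_sub => H n hn; have [e1 e2 e3] := H n hn.
by have [-> -> ->] := psl2_subE (phi x) (phi y) n; rewrite e1 e2 e3 !subrr.
Qed.

Lemma cons (X : nat -> loop K) : hatOA X -> forall n L, (n < L)%N ->
  [/\ pe (PhiH X) n = pe (phi (X L)) n, pf (PhiH X) n = pf (phi (X L)) n & ph (PhiH X) n = ph (phi (X L)) n].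
Proof.
case=> _ hc n L hn.
have := low_sub (ideal_low (hc n.+1 L hn)) (ltnSn n).
by case=> e1 e2 e3; rewrite /PhiH /=.
Qed.

Lemma sl2ll_sub (a b : psl2 K) : sl2ll a -> sl2ll b -> sl2ll (psl2_sub a b).
Proof.
move=> ha hb n; have [ha1 ha2] := ha n; have [hb1 hb2] := hb n.
split => hn; rewrite /= /padd /popp.
  by rewrite ha1 // hb1 // subrr.
by have [-> ->] := ha2 hn; have [-> ->] := hb2 hn; rewrite subrr.
Qed.

Lemma llL_self L (a b : psl2 K) : a = b -> sl2llL L (psl2_sub a b).
Proof.
move=> ->; split; last by move=> n _; rewrite /= /padd /popp !subrr.
by move=> n; rewrite /= /padd /popp !subrr.
Qed.

Lemma PhiH_ll X : hatOA X -> sl2ll (PhiH X).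
Proof.
case=> hO _ n; have [h1 h3] := OA_sl2ll h2 (hO n.+1) n.
by split.
Qed.

Lemma br_ext (a b a' b' : psl2 K) n :
  (forall i, (i <= n)%N -> [/\ pe a i = pe a' i, pf a i = pf a' i & ph a i = ph a' i]) ->
  (forall i, (i <= n)%N -> [/\ pe b i = pe b' i, pf b i = pf b' i & ph b i = ph b' i]) ->
  [/\ pe (psl2_br a b) n = pe (psl2_br a' b') n, pf (psl2_br a b) n = pf (psl2_br a' b') n
    & ph (psl2_br a b) n = ph (psl2_br a' b') n].
Proof.
move=> Ha Hb.
have E : forall (f g : psl2 K -> pser K), (forall i, (i <= n)%N -> f a i = f a' i) ->
   (forall i, (i <= n)%N -> g b i = g b' i) -> pmul (f a) (g b) n = pmul (f a') (g b') n.
  by move=> f g h1 h3; apply: pmul_ext.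
rewrite /psl2_br /= /pscale /padd /popp.
rewrite (E (@pe K) (@pf K)) ?(E (@pf K) (@pe K)) ?(E (@ph K) (@pe K)) ?(E (@pe K) (@ph K)) ?(E (@pf K) (@ph K)) ?(E (@ph K) (@pf K)) //;
  by move=> i hi; case: (Ha i hi); case: (Hb i hi).
Qed.

Theorem main :
  exists Phi : (nat -> loop K) -> psl2 K,
    (forall x, hatOA x -> sl2ll (Phi x)) /\
    (forall x y, hatOA x -> hatOA y -> (Phi x = Phi y <-> hat_eq x y)) /\
    (forall z, sl2ll z -> exists x, hatOA x /\ Phi x = z) /\
    (forall (c : K) x y, hatOA x -> hatOA y ->
       Phi (hat_add (hat_scale c x) y) = psl2_add (psl2_scale c (Phi x)) (Phi y)) /\
    (forall x y, hatOA x -> hatOA y ->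
       Phi (hat_br x y) = psl2_br (Phi x) (Phi y)) /\
    (forall (L : nat) x, hatOA x -> (ker_psi L x <-> sl2llL L (Phi x))) /\
    (forall L : nat, exists phi : loop K -> psl2 K,
       (forall x, OA x -> sl2ll (phi x)) /\
           (forall x, hatOA x -> sl2llL L (psl2_sub (Phi x) (phi (x L)))) /\
           (forall x y, OA x -> OA y ->
              (sl2llL L (psl2_sub (phi x) (phi y)) <-> OA_ideal L (loop_sub x y))) /\
           (forall z, sl2ll z -> exists x, OA x /\ sl2llL L (psl2_sub z (phi x))) /\
           (forall (c : K) x y, OA x -> OA y ->
              sl2llL L (psl2_sub (phi (loop_add (loop_scale c x) y))
                                 (psl2_add (psl2_scale c (phi x)) (phi y)))) /\
           (forall x y, OA x -> OA y ->
              sl2llL L (psl2_sub (phi (loop_br x y)) (psl2_br (phi x) (phi y))))).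
Proof.
exists PhiH; split; first exact: PhiH_ll.
split.
  move=> x y hx hy; split.
    move=> exy L; have hxL := proj1 hx L; have hyL := proj1 hy L.
    apply: (low_ideal h2 (OA_sub hxL hyL)); apply: sub_low => n hn.
    have [a1 a2 a3] := cons hx hn; have [b1 b2 b3] := cons hy hn.
    by rewrite -a1 -a2 -a3 -b1 -b2 -b3 exy.
  move=> hxy; apply: psl2_ext => n.
  have := low_sub (ideal_low (hxy n.+1)) (ltnSn n).
  by case=> e1 e2 e3; rewrite /PhiH /=.
split.
  move=> z hz.
  have H : forall L, exists w : loop K, OA w /\ (forall n, (n < L)%N ->
     [/\ pe (phi w) n = pe z n, pf (phi w) n = pf z n & ph (phi w) n = ph z n]).
    by move=> L; apply: surj_low.
  pose X L := proj1_sig (constructive_indefinite_description _ (H L)).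
  have HX : forall L, OA (X L) /\ (forall n, (n < L)%N ->
     [/\ pe (phi (X L)) n = pe z n, pf (phi (X L)) n = pf z n & ph (phi (X L)) n = ph z n]).
    by move=> L; exact: (proj2_sig (constructive_indefinite_description _ (H L))).
  exists X; split.
    split; first by move=> L; case: (HX L).
    move=> K' L hKL; apply: (low_ideal h2 (OA_sub (proj1 (HX L)) (proj1 (HX K')))).
    apply: sub_low => n hn.
    have [a1 a2 a3] := proj2 (HX L) n (leq_trans hn hKL).
    have [b1 b2 b3] := proj2 (HX K') n hn.
    by rewrite a1 a2 a3 b1 b2 b3.
  apply: psl2_ext => n; have [a1 a2 a3] := proj2 (HX n.+1) n (ltnSn n).
  by rewrite /PhiH /=.
split.
  move=> c x y _ _; apply: psl2_ext => n; rewrite /hat_add /hat_scale /PhiH; cbn [pe pf ph]; rewrite !phi_lin; by split.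
split.
  move=> x y hx hy; apply: psl2_ext => n.
  have H1 : forall i, (i <= n)%N -> [/\ pe (phi (x n.+1)) i = pe (PhiH x) i,
      pf (phi (x n.+1)) i = pf (PhiH x) i & ph (phi (x n.+1)) i = ph (PhiH x) i].
    by move=> i hi; have [a1 a2 a3] := cons hx (leq_ltn_trans hi (ltnSn n)); rewrite a1 a2 a3.
  have H2 : forall i, (i <= n)%N -> [/\ pe (phi (y n.+1)) i = pe (PhiH y) i,
      pf (phi (y n.+1)) i = pf (PhiH y) i & ph (phi (y n.+1)) i = ph (PhiH y) i].
    by move=> i hi; have [a1 a2 a3] := cons hy (leq_ltn_trans hi (ltnSn n)); rewrite a1 a2 a3.
  have [e1 e2 e3] := br_ext H1 H2.
  rewrite -e1 -e2 -e3 -(phi_br h2); by split.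
split.
  move=> L x hx; split.
    move=> hk; split; first exact: PhiH_ll.
    move=> n hn; have [a1 a2 a3] := cons hx hn; rewrite a1 a2 a3.
    exact: (ideal_low hk).
  case=> _ hl; apply: (low_ideal h2 (proj1 hx L)) => n hn.
  have [a1 a2 a3] := cons hx hn; rewrite -a1 -a2 -a3; exact: hl.
move=> L; exists (@phi K); split; first by move=> x; exact: OA_sl2ll.
split.
  move=> x hx; split.
    apply: sl2ll_sub; first exact: PhiH_ll.
    exact: (OA_sl2ll h2 (proj1 hx L)).
  move=> n hn; have [a1 a2 a3] := cons hx hn.
  by have [-> -> ->] := psl2_subE (PhiH x) (phi (x L)) n; rewrite a1 a2 a3 !subrr.
split.
  move=> x y hx hy; rewrite -phi_sub; split.
    by case=> _ hl; apply: (low_ideal h2 (OA_sub hx hy)).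
  move=> hI; split; first exact: (OA_sl2ll h2 (OA_sub hx hy)).
  exact: (ideal_low hI).
split.
  move=> z hz; have [w [hw hl]] := surj_low h2 L hz.
  exists w; split => //; split; first by apply: sl2ll_sub => //; exact: OA_sl2ll.
  move=> n hn; have [a1 a2 a3] := hl n hn.
  by have [-> -> ->] := psl2_subE z (phi w) n; rewrite a1 a2 a3 !subrr.
split.
  by move=> c x y _ _; apply: llL_self; rewrite phi_lin.
by move=> x y _ _; apply: llL_self; rewrite (phi_br h2).
Qed.

End Main.

End Dev.
Import Dev.

Lemma two_Cx (R : realType) : (2%R : Cx R) != 0%R.
Proof. have h : (2%R : R[i]) != 0%R by rewrite pnatr_eq0. exact: h. Qed.

Theorem theorem5 (R : realType) :
  exists Phi : (nat -> loop (Cx R)) -> psl2 (Cx R),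
    (* Phi is well defined on the inverse limit, injective, with values in sl2<<l>> *)
    (forall x, hatOA x -> sl2ll (Phi x)) /\
    (forall x y, hatOA x -> hatOA y -> (Phi x = Phi y <-> hat_eq x y)) /\
    (* surjective onto sl2<<l>> *)
    (forall z, sl2ll z -> exists x, hatOA x /\ Phi x = z) /\
    (* C-linear *)
    (forall (c : Cx R) x y, hatOA x -> hatOA y ->
       Phi (hat_add (hat_scale c x) y) = psl2_add (psl2_scale c (Phi x)) (Phi y)) /\
    (* Lie algebra morphism *)
    (forall x y, hatOA x -> hatOA y ->
       Phi (hat_br x y) = psl2_br (Phi x) (Phi y)) /\
    (* maps \hat{OA}_1^L onto sl2<<l>>^L *)
    (forall (L : nat) x, hatOA x -> (ker_psi L x <-> sl2llL L (Phi x))) /\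
    (* the induced isomorphisms OA_{1,L} ~ sl2<<l>> / sl2<<l>>^L *)
    (forall L : nat, exists phi : loop (Cx R) -> psl2 (Cx R),
       (forall x, OA x -> sl2ll (phi x)) /\
           (forall x, hatOA x -> sl2llL L (psl2_sub (Phi x) (phi (x L)))) /\
           (forall x y, OA x -> OA y ->
              (sl2llL L (psl2_sub (phi x) (phi y)) <-> OA_ideal L (loop_sub x y))) /\
           (forall z, sl2ll z -> exists x, OA x /\ sl2llL L (psl2_sub z (phi x))) /\
           (forall (c : Cx R) x y, OA x -> OA y ->
              sl2llL L (psl2_sub (phi (loop_add (loop_scale c x) y))
                                 (psl2_add (psl2_scale c (phi x)) (phi y)))) /\
           (forall x y, OA x -> OA y ->
              sl2llL L (psl2_sub (phi (loop_br x y)) (psl2_br (phi x) (phi y))))).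
Proof. exact: (main (two_Cx R)). Qed.
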